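(* Let $H$ be the 28-element set $H=\{n_M : n\in\mathbb{Z}_{12}\}\cup\{n_m : n\in\mathbb{Z}_{12}\}\cup\{n_{\mathrm{aug}} : n\in\{0,1,2,3\}\}$, and define three relations on $H$: - $\mathcal{P}$ is the symmetric relation consisting exactly of the pairs $(n_M,n_m)$ and $(n_m,n_M)$ for $n\in\mathbb{Z}_{12}$, together with the pairs $(n_{\mathrm{aug}},n_{\mathrm{aug}})$ for $0\le n\le 3$; - $\mathcal{L}$ is the symmetric relation consisting exactly of the pairs $(n_M,(n+4)_m)$ and $((n+4)_m,n_M)$ for $n\in\mathbb{Z}_{12}$, together with the pairs $(n_{\mathrm{aug}},n_{\mathrm{aug}})$ for $0\le n\le 3$; - $\mathcal{U}$ is the symmetric relation consisting exactly of the pairs $(n_M,(n \bmod 4)_{\mathrm{aug}})$, $(n_m,((n+3)\bmod 4)_{\mathrm{aug}})$ for $n\in\mathbb{Z}_{12}$, together with their reverses. Let $M_{\mathcal{UPL}}$ be the monoid of relations on $H$ generated by $\mathcal{U},\mathcal{P},\mathcal{L}$ under composition of relations (with identity $e$ the identity relation). Then $M_{\mathcal{UPL}}$ has 40 elements and has the presentation $$M_{\mathcal{UPL}}=\langle \mathcal{U},\mathcal{P},\mathcal{L}\mid \mathcal{P}^2=\mathcal{L}^2=e,\ \mathcal{LPL}=\mathcal{PLP},\ \mathcal{U}^3=\mathcal{U},\ \mathcal{UP}=\mathcal{UL},\ \mathcal{PU}=\mathcal{LU},\ \mathcal{U}^2\mathcal{PU}^2=\mathcal{P}\mathcal{U}^2\mathcal{PU}^2\mathcal{P},\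 (\mathcal{UP})^2\mathcal{U}^2=\mathcal{P}(\mathcal{UP})^2\mathcal{U}^2\mathcal{P},\ \mathcal{U}^2(\mathcal{PU})^2=\mathcal{P}\mathcal{U}^2(\mathcal{PU})^2\mathcal{P}\rangle.$$
   Context: Indices $n$ of $n_M,n_m$ are taken modulo 12. The elements of $H$ are formal labels (musically, $n_M$ is the major triad $\{n,n+4,n+7\}$, $n_m$ the minor triad $\{n,n+3,n+7\}$, and $k_{\mathrm{aug}}$ the augmented triad $\{k,k+4,k+8\}$, all in $\mathbb{Z}_{12}$). Composition of relations: for relations $\mathcal{R},\mathcal{R}'$ on $H$, $\mathcal{R}'\mathcal{R}=\mathcal{R}'\circ\mathcal{R}$ is the set of pairs $(x,z)$ such that there exists $y$ with $(x,y)\in\mathcal{R}$ and $(y,z)\in\mathcal{R}'$. Juxtaposition of words in the presentation denotes this composition. *)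

(* Defs.v *)
From Stdlib Require List.
From mathcomp Require Import all_boot.
Set Implicit Arguments. Unset Strict Implicit. Unset Printing Implicit Defensive.

(* H = {n_M} (12) + {n_m} (12) + {k_aug, k = 0..3} (4) *)
Definition H : finType := ('I_12 + 'I_12 + 'I_4)%type.

Definition hrel := {set (H * H)}.

Definition relP (x y : H) : bool :=
  match x, y with
  | inl (inl n), inl (inr m) => val n == val m
  | inl (inr n), inl (inl m) => val n == val m
  | inr k, inr l => val k == val l
  | _, _ => false
  end.

Definition relL (x y : H) : bool :=
  match x, y with
  | inl (inl n), inl (inr m) => val m == (val n + 4) %% 12
  | inl (inr m), inl (inl n) => val m == (val n + 4) %% 12
  | inr k, inr l => val k == val l
  | _, _ => false
  end.

Definition relU (x y : H) : bool :=
  match x, y with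
  | inl (inl n), inr k => val k == val n %% 4
  | inr k, inl (inl n) => val k == val n %% 4
  | inl (inr n), inr k => val k == (val n + 3) %% 4
  | inr k, inl (inr n) => val k == (val n + 3) %% 4
  | _, _ => false
  end.

Definition Prel : hrel := [set p | relP p.1 p.2].
Definition Lrel : hrel := [set p | relL p.1 p.2].
Definition Urel : hrel := [set p | relU p.1 p.2].

Definition idrel : hrel := [set p | p.1 == p.2].

(* comp R' R = R' R = R' o R = {(x,z) | exists y, (x,y) in R /\ (y,z) in R'} *)
Definition comp (R' R : hrel) : hrel :=
  [set p | [exists y : H, ((p.1, y) \in R) && ((y, p.2) \in R')]].

Inductive gen := gU | gP | gL.

Definition gen_rel (g : gen) : hrel :=
  match g with gU => Urel | gP => Prel | gL => Lrel end.

(* the word [:: a1; ...; ak] denotes the juxtaposition a1 a2 ... ak *)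
Fixpoint eval (w : seq gen) : hrel :=
  match w with
  | [::] => idrel
  | g :: w' => comp (gen_rel g) (eval w')
  end.

Definition inM (R : hrel) : Prop := exists w : seq gen, eval w = R.

Definition U := gU. Definition P := gP. Definition L := gL.
Definition presentation_rels : seq (seq gen * seq gen) :=
  [:: ([:: P; P], [::]);
      ([:: L; L], [::]);
      ([:: L; P; L], [:: P; L; P]);
      ([:: U; U; U], [:: U]);
      ([:: U; P], [:: U; L]);
      ([:: P; U], [:: L; U]);
      ([:: U; U; P; U; U], [:: P; U; U; P; U; U; P]);
      ([:: U; P; U; P; U; U], [:: P; U; P; U; P; U; U; P]);
      ([:: U; U; P; U; P; U], [:: P; U; U; P; U; P; U; P])].

Inductive pres_cong : seq gen -> seq gen -> Prop :=
  | pc_rel : forall (l r u v : seq gen), List.In (l, r) presentation_rels ->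
      pres_cong (u ++ l ++ v) (u ++ r ++ v)
  | pc_refl : forall w, pres_cong w w
  | pc_sym : forall w1 w2, pres_cong w1 w2 -> pres_cong w2 w1
  | pc_trans : forall w1 w2 w3, pres_cong w1 w2 -> pres_cong w2 w3 -> pres_cong w1 w3.

(* Main.v *)
Require Import Defs.
From mathcomp Require Import all_boot.
From HB Require Import structures.
From Stdlib Require List.
Set Implicit Arguments. Unset Strict Implicit. Unset Printing Implicit Defensive.

Definition gen_eqb (a b : gen) : bool :=
  match a, b with gU, gU | gP, gP | gL, gL => true | _, _ => false end.
Lemma gen_eqP : Equality.axiom gen_eqb.
Proof. by case; case; constructor. Qed.
HB.instance Definition _ := hasDecEq.Build gen gen_eqP.

Definition NF : seq (seq gen) := [::
 
[::];
 [:: gU];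
 [:: gP];
 [:: gL];
 [:: gU; gU];
 [:: gU; gP];
 [:: gP; gU];
 [:: gP; gL];
 [:: gL; gP];
 [:: gU; gU; gP];
 [:: gU; gP; gU];
 [:: gP; gU; gU];
 [:: gP; gU; gP];
 [:: gP; gL; gP];
 [:: gU; gU; gP; gU];
 [:: gU; gP; gU; gU];
 [:: gU; gP; gU; gP];
 [:: gP; gU; gU; gP];
 [:: gP; gU; gP; gU];
 [:: gU; gU; gP; gU; gU];
 [:: gU; gU; gP; gU; gP];
 [:: gU; gP; gU; gU; gP];
 [:: gU; gP; gU; gP; gU];
 [:: gP; gU; gU; gP; gU];
 [:: gP; gU; gP; gU; gU];
 [:: gP; gU; gP; gU; gP];
 [:: gU; gU; gP; gU; gU; gP];
 [:: gU; gU; gP; gU; gP; gU];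
 [:: gU; gP; gU; gU; gP; gU];
 [:: gU; gP; gU; gP; gU; gP];
 [:: gP; gU; gU; gP; gU; gP];
 [:: gP; gU; gP; gU; gU; gP];
 [:: gP; gU; gP; gU; gP; gU];
 [:: gU; gU; gP; gU; gP; gU; gP];
 [:: gU; gP; gU; gU; gP; gU; gP];
 [:: gU; gP; gU; gP; gU; gP; gU];
 [:: gP; gU; gP; gU; gU; gP; gU];
 [:: gP; gU; gP; gU; gP; gU; gP];
 [:: gU; gP; gU; gP; gU; gP; gU; gP];
 [:: gP; gU; gP; gU; gU; gP; gU; gP]].
Definition table : seq (seq gen * gen * seq gen * seq (seq gen)) := [::
([::], gU, [:: gU], [:: ]);
 ([::], gP, [:: gP], [:: ]);
 ([::], gL, [:: gL], [:: ]);
 ([:: gU], gU, [:: gU; gU], [:: ]);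
 ([:: gU], gP, [:: gU; gP], [:: ]);
 ([:: gU], gL, [:: gU; gP], [:: [:: gU; gP]]);
 ([:: gP], gU, [:: gP; gU], [:: ]);
 ([:: gP], gP, [::], [:: [::]]);
 ([:: gP], gL, [:: gP; gL], [:: ]);
 ([:: gL], gU, [:: gP; gU], [:: [:: gP; gU]]);
 ([:: gL], gP, [:: gL; gP], [:: ]);
 ([:: gL], gL, [::], [:: [::]]);
 ([:: gU; gU], gU, [:: gU], [:: [:: gU]]);
 ([:: gU; gU], gP, [:: gU; gU; gP], [:: ]);
 ([:: gU; gU], gL, [:: gU; gU; gP], [:: [:: gU; gU; gP]]);
 ([:: gU; gP], gU, [:: gU; gP; gU], [:: ]);
 ([:: gU; gP], gP, [:: gU], [:: [:: gU]]);
 ([:: gU; gP], gL, [:: gU], [:: [:: gU; gL; gL]; [:: gU]]);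
 ([:: gP; gU], gU, [:: gP; gU; gU], [:: ]);
 ([:: gP; gU], gP, [:: gP; gU; gP], [:: ]);
 ([:: gP; gU], gL, [:: gP; gU; gP], [:: [:: gP; gU; gP]]);
 ([:: gP; gL], gU, [:: gU], [:: [:: gP; gP; gU]; [:: gU]]);
 ([:: gP; gL], gP, [:: gP; gL; gP], [:: ]);
 ([:: gP; gL], gL, [:: gP], [:: [:: gP]]);
 ([:: gL; gP], gU, [:: gU], [:: [:: gL; gL; gU]; [:: gU]]);
 ([:: gL; gP], gP, [:: gL], [:: [:: gL]]);
 ([:: gL; gP], gL, [:: gP; gL; gP], [:: [:: gP; gL; gP]]);
 ([:: gU; gU; gP], gU, [:: gU; gU; gP; gU], [:: ]);
 ([:: gU; gU; gP], gP, [:: gU; gU], [:: [:: gU; gU]]);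
 ([:: gU; gU; gP], gL, [:: gU; gU], [:: [:: gU; gU; gL; gL]; [:: gU; gU]]);
 ([:: gU; gP; gU], gU, [:: gU; gP; gU; gU], [:: ]);
 ([:: gU; gP; gU], gP, [:: gU; gP; gU; gP], [:: ]);
 ([:: gU; gP; gU], gL, [:: gU; gP; gU; gP], [:: [:: gU; gP; gU; gP]]);
 ([:: gP; gU; gU], gU, [:: gP; gU], [:: [:: gP; gU]]);
 ([:: gP; gU; gU], gP, [:: gP; gU; gU; gP], [:: ]);
 ([:: gP; gU; gU], gL, [:: gP; gU; gU; gP], [:: [:: gP; gU; gU; gP]]);
 ([:: gP; gU; gP], gU, [:: gP; gU; gP; gU], [:: ]);
 ([:: gP; gU; gP], gP, [:: gP; gU], [:: [:: gP; gU]]);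
 ([:: gP; gU; gP], gL, [:: gP; gU], [:: [:: gP; gU; gL; gL]; [:: gP; gU]]);
 ([:: gP; gL; gP], gU, [:: gP; gU], [:: [:: gP; gL; gL; gU]; [:: gP; gU]]);
 ([:: gP; gL; gP], gP, [:: gP; gL], [:: [:: gP; gL]]);
 ([:: gP; gL; gP], gL, [:: gL; gP], [:: [:: gP; gP; gL; gP]; [:: gL; gP]]);
 ([:: gU; gU; gP; gU], gU, [:: gU; gU; gP; gU; gU], [:: ]);
 ([:: gU; gU; gP; gU], gP, [:: gU; gU; gP; gU; gP], [:: ]);
 ([:: gU; gU; gP; gU], gL, [:: gU; gU; gP; gU; gP], [:: [:: gU; gU; gP; gU; gP]]);
 ([:: gU; gP; gU; gU], gU, [:: gU; gP; gU], [:: [:: gU; gP; gU]]);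
 ([:: gU; gP; gU; gU], gP, [:: gU; gP; gU; gU; gP], [:: ]);
 ([:: gU; gP; gU; gU], gL, [:: gU; gP; gU; gU; gP], [:: [:: gU; gP; gU; gU; gP]]);
 ([:: gU; gP; gU; gP], gU, [:: gU; gP; gU; gP; gU], [:: ]);
 ([:: gU; gP; gU; gP], gP, [:: gU; gP; gU], [:: [:: gU; gP; gU]]);
 ([:: gU; gP; gU; gP], gL, [:: gU; gP; gU], [:: [:: gU; gP; gU; gL; gL]; [:: gU; gP; gU]]);
 ([:: gP; gU; gU; gP], gU, [:: gP; gU; gU; gP; gU], [:: ]);
 ([:: gP; gU; gU; gP], gP, [:: gP; gU; gU], [:: [:: gP; gU; gU]]);
 ([:: gP; gU; gU; gP], gL, [:: gP; gU; gU], [:: [:: gP; gU; gU; gL; gL]; [:: gP; gU; gU]]);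
 ([:: gP; gU; gP; gU], gU, [:: gP; gU; gP; gU; gU], [:: ]);
 ([:: gP; gU; gP; gU], gP, [:: gP; gU; gP; gU; gP], [:: ]);
 ([:: gP; gU; gP; gU], gL, [:: gP; gU; gP; gU; gP], [:: [:: gP; gU; gP; gU; gP]]);
 ([:: gU; gU; gP; gU; gU], gU, [:: gU; gU; gP; gU], [:: [:: gU; gU; gP; gU]]);
 ([:: gU; gU; gP; gU; gU], gP, [:: gU; gU; gP; gU; gU; gP], [:: ]);
 ([:: gU; gU; gP; gU; gU], gL, [:: gU; gU; gP; gU; gU; gP], [:: [:: gU; gU; gP; gU; gU; gP]]);
 ([:: gU; gU; gP; gU; gP], gU, [:: gU; gU; gP; gU; gP; gU], [:: ]);
 ([:: gU; gU; gP; gU; gP], gP, [:: gU; gU; gP; gU], [:: [:: gU; gU; gP; gU]]);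
 ([:: gU; gU; gP; gU; gP], gL, [:: gU; gU; gP; gU], [:: [:: gU; gU; gP; gU; gL; gL]; [:: gU; gU; gP; gU]]);
 ([:: gU; gP; gU; gU; gP], gU, [:: gU; gP; gU; gU; gP; gU], [:: ]);
 ([:: gU; gP; gU; gU; gP], gP, [:: gU; gP; gU; gU], [:: [:: gU; gP; gU; gU]]);
 ([:: gU; gP; gU; gU; gP], gL, [:: gU; gP; gU; gU], [:: [:: gU; gP; gU; gU; gL; gL]; [:: gU; gP; gU; gU]]);
 ([:: gU; gP; gU; gP; gU], gU, [:: gU; gU; gP; gU; gP; gU], [:: [:: gP; gU; gP; gU; gP; gU; gU; gP]; [:: gP; gU; gU; gU; gP; gU; gP; gU; gU; gP]; [:: gP; gU; gU; gP; gU; gP; gU; gP; gU; gU; gP; gP]; [:: gP; gU; gU; gP; gU; gP; gU; gP; gU; gU]; [:: gU; gU; gP; gU; gP; gU; gU; gU]; [:: gU; gU; gP; gU; gP; gU]]);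
 ([:: gU; gP; gU; gP; gU], gP, [:: gU; gP; gU; gP; gU; gP], [:: ]);
 ([:: gU; gP; gU; gP; gU], gL, [:: gU; gP; gU; gP; gU; gP], [:: [:: gU; gP; gU; gP; gU; gP]]);
 ([:: gP; gU; gU; gP; gU], gU, [:: gU; gU; gP; gU; gU; gP], [:: [:: gP; gP; gU; gU; gP; gU; gU; gP]; [:: gU; gU; gP; gU; gU; gP]]);
 ([:: gP; gU; gU; gP; gU], gP, [:: gP; gU; gU; gP; gU; gP], [:: ]);
 ([:: gP; gU; gU; gP; gU], gL, [:: gP; gU; gU; gP; gU; gP], [:: [:: gP; gU; gU; gP; gU; gP]]);
 ([:: gP; gU; gP; gU; gU], gU, [:: gP; gU; gP; gU], [:: [:: gP; gU; gP; gU]]);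
 ([:: gP; gU; gP; gU; gU], gP, [:: gP; gU; gP; gU; gU; gP], [:: ]);
 ([:: gP; gU; gP; gU; gU], gL, [:: gP; gU; gP; gU; gU; gP], [:: [:: gP; gU; gP; gU; gU; gP]]);
 ([:: gP; gU; gP; gU; gP], gU, [:: gP; gU; gP; gU; gP; gU], [:: ]);
 ([:: gP; gU; gP; gU; gP], gP, [:: gP; gU; gP; gU], [:: [:: gP; gU; gP; gU]]);
 ([:: gP; gU; gP; gU; gP], gL, [:: gP; gU; gP; gU], [:: [:: gP; gU; gP; gU; gL; gL]; [:: gP; gU; gP; gU]]);
 ([:: gU; gU; gP; gU; gU; gP], gU, [:: gP; gU; gU; gP; gU], [:: [:: gP; gU; gU; gP; gU; gU; gP; gP; gU]; [:: gP; gU; gU; gP; gU; gU; gU]; [:: gP; gU; gU; gP; gU]]);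
 ([:: gU; gU; gP; gU; gU; gP], gP, [:: gU; gU; gP; gU; gU], [:: [:: gU; gU; gP; gU; gU]]);
 ([:: gU; gU; gP; gU; gU; gP], gL, [:: gU; gU; gP; gU; gU], [:: [:: gU; gU; gP; gU; gU; gL; gL]; [:: gU; gU; gP; gU; gU]]);
 ([:: gU; gU; gP; gU; gP; gU], gU, [:: gU; gP; gU; gP; gU], [:: [:: gU; gP; gU; gP; gU; gP; gU; gU; gP]; [:: gU; gU; gU; gP; gU; gP; gU; gP; gU; gU; gP]; [:: gU; gP; gU; gU; gP; gU; gP; gU; gP; gP; gU; gU; gP]; [:: gU; gP; gU; gU; gP; gU; gP; gU; gU; gU; gP]; [:: gU; gP; gU; gU; gP; gU; gP; gU; gP]; [:: gU; gU; gU; gP; gU; gP; gU]; [:: gU; gP; gU; gP; gU]]);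
 ([:: gU; gU; gP; gU; gP; gU], gP, [:: gU; gU; gP; gU; gP; gU; gP], [:: ]);
 ([:: gU; gU; gP; gU; gP; gU], gL, [:: gU; gU; gP; gU; gP; gU; gP], [:: [:: gU; gU; gP; gU; gP; gU; gP]]);
 ([:: gU; gP; gU; gU; gP; gU], gU, [:: gU; gP; gU; gU; gP], [:: [:: gU; gP; gP; gU; gU; gP; gU; gU; gP]; [:: gU; gU; gU; gP; gU; gU; gP]; [:: gU; gP; gU; gU; gP]]);
 ([:: gU; gP; gU; gU; gP; gU], gP, [:: gU; gP; gU; gU; gP; gU; gP], [:: ]);
 ([:: gU; gP; gU; gU; gP; gU], gL, [:: gU; gP; gU; gU; gP; gU; gP], [:: [:: gU; gP; gU; gU; gP; gU; gP]]);
 ([:: gU; gP; gU; gP; gU; gP], gU, [:: gU; gP; gU; gP; gU; gP; gU], [:: ]);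
 ([:: gU; gP; gU; gP; gU; gP], gP, [:: gU; gP; gU; gP; gU], [:: [:: gU; gP; gU; gP; gU]]);
 ([:: gU; gP; gU; gP; gU; gP], gL, [:: gU; gP; gU; gP; gU], [:: [:: gU; gP; gU; gP; gU; gL; gL]; [:: gU; gP; gU; gP; gU]]);
 ([:: gP; gU; gU; gP; gU; gP], gU, [:: gU; gU; gP; gU; gP; gU; gP], [:: [:: gP; gP; gU; gU; gP; gU; gP; gU; gP]; [:: gU; gU; gP; gU; gP; gU; gP]]);
 ([:: gP; gU; gU; gP; gU; gP], gP, [:: gP; gU; gU; gP; gU], [:: [:: gP; gU; gU; gP; gU]]);
 ([:: gP; gU; gU; gP; gU; gP], gL, [:: gP; gU; gU; gP; gU], [:: [:: gP; gU; gU; gP; gU; gL; gL]; [:: gP; gU; gU; gP; gU]]);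
 ([:: gP; gU; gP; gU; gU; gP], gU, [:: gP; gU; gP; gU; gU; gP; gU], [:: ]);
 ([:: gP; gU; gP; gU; gU; gP], gP, [:: gP; gU; gP; gU; gU], [:: [:: gP; gU; gP; gU; gU]]);
 ([:: gP; gU; gP; gU; gU; gP], gL, [:: gP; gU; gP; gU; gU], [:: [:: gP; gU; gP; gU; gU; gL; gL]; [:: gP; gU; gP; gU; gU]]);
 ([:: gP; gU; gP; gU; gP; gU], gU, [:: gU; gU; gP; gU; gP; gU; gP], [:: [:: gP; gU; gU; gU; gP; gU; gP; gU; gU]; [:: gP; gU; gU; gP; gU; gP; gU; gP; gU; gU; gP]; [:: gU; gU; gP; gU; gP; gU; gU; gU; gP]; [:: gU; gU; gP; gU; gP; gU; gP]]);
 ([:: gP; gU; gP; gU; gP; gU], gP, [:: gP; gU; gP; gU; gP; gU; gP], [:: ]);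
 ([:: gP; gU; gP; gU; gP; gU], gL, [:: gP; gU; gP; gU; gP; gU; gP], [:: [:: gP; gU; gP; gU; gP; gU; gP]]);
 ([:: gU; gU; gP; gU; gP; gU; gP], gU, [:: gP; gU; gP; gU; gP; gU], [:: [:: gU; gU; gP; gU; gP; gU; gU; gU; gP; gU]; [:: gP; gU; gU; gP; gU; gP; gU; gP; gU; gU; gP; gU]; [:: gP; gU; gU; gU; gP; gU; gP; gU; gU; gU]; [:: gP; gU; gP; gU; gP; gU; gU; gU]; [:: gP; gU; gP; gU; gP; gU]]);
 ([:: gU; gU; gP; gU; gP; gU; gP], gP, [:: gU; gU; gP; gU; gP; gU], [:: [:: gU; gU; gP; gU; gP; gU]]);
 ([:: gU; gU; gP; gU; gP; gU; gP], gL, [:: gU; gU; gP; gU; gP; gU], [:: [:: gU; gU; gP; gU; gP; gU; gL; gL]; [:: gU; gU; gP; gU; gP; gU]]);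
 ([:: gU; gP; gU; gU; gP; gU; gP], gU, [:: gU; gP; gU; gP; gU; gP], [:: [:: gU; gP; gP; gU; gU; gP; gU; gP; gU; gP]; [:: gU; gU; gU; gP; gU; gP; gU; gP]; [:: gU; gP; gU; gP; gU; gP]]);
 ([:: gU; gP; gU; gU; gP; gU; gP], gP, [:: gU; gP; gU; gU; gP; gU], [:: [:: gU; gP; gU; gU; gP; gU]]);
 ([:: gU; gP; gU; gU; gP; gU; gP], gL, [:: gU; gP; gU; gU; gP; gU], [:: [:: gU; gP; gU; gU; gP; gU; gL; gL]; [:: gU; gP; gU; gU; gP; gU]]);
 ([:: gU; gP; gU; gP; gU; gP; gU], gU, [:: gU; gP; gU; gP; gU; gP], [:: [:: gU; gP; gU; gU; gU; gP; gU; gP; gU; gU]; [:: gU; gP; gU; gU; gP; gU; gP; gU; gP; gU; gU; gP]; [:: gU; gU; gU; gP; gU; gP; gU; gU; gU; gP]; [:: gU; gP; gU; gP; gU; gU; gU; gP]; [:: gU; gP; gU; gP; gU; gP]]);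
 ([:: gU; gP; gU; gP; gU; gP; gU], gP, [:: gU; gP; gU; gP; gU; gP; gU; gP], [:: ]);
 ([:: gU; gP; gU; gP; gU; gP; gU], gL, [:: gU; gP; gU; gP; gU; gP; gU; gP], [:: [:: gU; gP; gU; gP; gU; gP; gU; gP]]);
 ([:: gP; gU; gP; gU; gU; gP; gU], gU, [:: gP; gU; gP; gU; gU; gP], [:: [:: gP; gU; gP; gP; gU; gU; gP; gU; gU; gP]; [:: gP; gU; gU; gU; gP; gU; gU; gP]; [:: gP; gU; gP; gU; gU; gP]]);
 ([:: gP; gU; gP; gU; gU; gP; gU], gP, [:: gP; gU; gP; gU; gU; gP; gU; gP], [:: ]);
 ([:: gP; gU; gP; gU; gU; gP; gU], gL, [:: gP; gU; gP; gU; gU; gP; gU; gP], [:: [:: gP; gU; gP; gU; gU; gP; gU; gP]]);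
 ([:: gP; gU; gP; gU; gP; gU; gP], gU, [:: gU; gP; gU; gP; gU; gP; gU; gP], [:: [:: gP; gU; gP; gU; gU; gU; gP; gU; gP; gU]; [:: gP; gU; gP; gU; gP; gU; gU; gP; gU; gP; gU; gP]; [:: gU; gP; gU; gP; gU; gU; gU; gP; gU; gP]; [:: gU; gP; gU; gP; gU; gP; gU; gP]]);
 ([:: gP; gU; gP; gU; gP; gU; gP], gP, [:: gP; gU; gP; gU; gP; gU], [:: [:: gP; gU; gP; gU; gP; gU]]);
 ([:: gP; gU; gP; gU; gP; gU; gP], gL, [:: gP; gU; gP; gU; gP; gU], [:: [:: gP; gU; gP; gU; gP; gU; gL; gL]; [:: gP; gU; gP; gU; gP; gU]]);
 ([:: gU; gP; gU; gP; gU; gP; gU; gP], gU, [:: gP; gU; gP; gU; gP; gU; gP], [:: [:: gU; gP; gU; gP; gU; gU; gU; gP; gU; gP; gU]; [:: gP; gU; gP; gU; gP; gU; gU; gP; gU; gP; gU; gP; gU]; [:: gP; gU; gP; gU; gU; gU; gP; gU; gP; gU; gU]; [:: gP; gU; gP; gU; gU; gP; gU; gP; gU; gP; gU; gU; gP]; [:: gP; gU; gU; gU; gP; gU; gP; gU; gU; gU; gP]; [:: gP; gU; gP; gU; gP; gU; gU; gU; gP]; [:: gP; gU; gP; gU; gP; gU; gP]]);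
 ([:: gU; gP; gU; gP; gU; gP; gU; gP], gP, [:: gU; gP; gU; gP; gU; gP; gU], [:: [:: gU; gP; gU; gP; gU; gP; gU]]);
 ([:: gU; gP; gU; gP; gU; gP; gU; gP], gL, [:: gU; gP; gU; gP; gU; gP; gU], [:: [:: gU; gP; gU; gP; gU; gP; gU; gL; gL]; [:: gU; gP; gU; gP; gU; gP; gU]]);
 ([:: gP; gU; gP; gU; gU; gP; gU; gP], gU, [:: gP; gU; gP; gU; gP; gU; gP], [:: [:: gP; gU; gP; gP; gU; gU; gP; gU; gP; gU; gP]; [:: gP; gU; gU; gU; gP; gU; gP; gU; gP]; [:: gP; gU; gP; gU; gP; gU; gP]]);
 ([:: gP; gU; gP; gU; gU; gP; gU; gP], gP, [:: gP; gU; gP; gU; gU; gP; gU], [:: [:: gP; gU; gP; gU; gU; gP; gU]]);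
 ([:: gP; gU; gP; gU; gU; gP; gU; gP], gL, [:: gP; gU; gP; gU; gU; gP; gU], [:: [:: gP; gU; gP; gU; gU; gP; gU; gL; gL]; [:: gP; gU; gP; gU; gU; gP; gU]])].

Definition rels2 : seq (seq gen * seq gen) :=
  presentation_rels ++ [seq (p.2, p.1) | p <- presentation_rels].

Definition onestep (x y : seq gen) : bool :=
  has (fun i => has (fun lr =>
     (take (size lr.1) (drop i x) == lr.1) &&
     (y == take i x ++ lr.2 ++ drop (size lr.1) (drop i x))) rels2)
   (iota 0 (size x).+1).

Fixpoint chain_ok (x : seq gen) (c : seq (seq gen)) (t : seq gen) : bool :=
  match c with [::] => x == t | y :: c' => onestep x y && chain_ok y c' t end.

Lemma mem_In (T : eqType) (a : T) s : a \in s -> List.In a s.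
Proof. elim: s => //= b s IH; rewrite inE => /orP [/eqP ->|/IH]; auto. Qed.

Lemma onestep_ok x y : onestep x y -> pres_cong x y.
Proof.
move=> /hasP [i _] /hasP [[l r] Hin] /= /andP [/eqP Hl /eqP ->].
have Ex : x = take i x ++ l ++ drop (size l) (drop i x).
  by rewrite -{1}Hl cat_take_drop cat_take_drop.
move: Hin; rewrite mem_cat => /orP [H|/mapP [[l' r'] H [El Er]]].
  by rewrite {1}Ex; apply: pc_rel; apply: mem_In.
rewrite {1}Ex; apply: pc_sym; rewrite El Er /=; apply: pc_rel; exact: mem_In.
Qed.

Lemma chain_ok_sound x c t : chain_ok x c t -> pres_cong x t.
Proof.
elim: c x => [|y c IH] x /=; first by move/eqP ->; apply: pc_refl.
by case/andP => /onestep_ok H1 /IH H2; apply: pc_trans H1 H2.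
Qed.

Definition lookup (s : seq gen) (g : gen) :=
  [seq e <- table | (e.1.1.1 == s) && (e.1.1.2 == g)].
Definition step (s : seq gen) (g : gen) : seq gen :=
  if lookup s g is e :: _ then e.1.2 else s.
Definition cert (s : seq gen) (g : gen) : seq (seq gen) :=
  if lookup s g is e :: _ then e.2 else [::].

Definition all_ok : bool :=
  all (fun s => all (fun g => (step s g \in NF) && chain_ok (s ++ [:: g]) (cert s g) (step s g))
     [:: gU; gP; gL]) NF.

Lemma all_ok_true : all_ok.
Proof. by vm_compute. Qed.

Lemma step_ok s g : s \in NF -> pres_cong (s ++ [:: g]) (step s g) /\ step s g \in NF.
Proof.
move=> Hs; have := allP all_ok_true s Hs => /allP /(_ g).
by case: g => /(_ isT) /andP [H1 /chain_ok_sound H2].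
Qed.

Definition nf (w : seq gen) : seq gen := foldl step [::] w.

Lemma pres_cong_catr a b c : pres_cong a b -> pres_cong (a ++ c) (b ++ c).
Proof.
elim=> [l r u v H| w | w1 w2 _ IH | w1 w2 w3 _ IH1 _ IH2].
- by rewrite -!catA; apply: pc_rel.
- exact: pc_refl.
- exact: pc_sym.
- exact: pc_trans IH1 IH2.
Qed.

Lemma nf_ok w : pres_cong w (nf w) /\ nf w \in NF.
Proof.
elim/last_ind: w => [|w g [IH1 IH2]]; first by split; [apply: pc_refl|].
rewrite /nf -cats1 foldl_cat /= -/(nf w).
have [H1 H2] := step_ok g IH2; split => //.
apply: pc_trans H1; exact: pres_cong_catr.
Qed.


Definition ords12 : seq 'I_12 := [:: @Ordinal 12 0 isT; @Ordinal 12 1 isT; @Ordinal 12 2 isT; @Ordinal 12 3 isT; @Ordinal 12 4 isT; @Ordinal 12 5 isT; @Ordinal 12 6 isT; @Ordinal 12 7 isT; @Ordinal 12 8 isT; @Ordinal 12 9 isT; @Ordinal 12 10 isT; @Ordinal 12 11 isT].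
Definition ords4 : seq 'I_4 := [:: @Ordinal 4 0 isT; @Ordinal 4 1 isT; @Ordinal 4 2 isT; @Ordinal 4 3 isT].
Lemma mem_ords12 (i : 'I_12) : i \in ords12.
Proof. case: i => m Hm; do 12?[case: m Hm => [|m] Hm; first by []]; by []. Qed.
Lemma mem_ords4 (i : 'I_4) : i \in ords4.
Proof. case: i => m Hm; do 4?[case: m Hm => [|m] Hm; first by []]; by []. Qed.
Definition allH : seq H :=
  [seq inl (inl i) | i <- ords12] ++ [seq inl (inr i) | i <- ords12] ++ [seq inr i | i <- ords4].
Lemma mem_allH (x : H) : x \in allH.
Proof.
case: x => [[i|i]|i]; rewrite !mem_cat; apply/orP; [left|right;apply/orP;left|right;apply/orP;right];
  apply: map_f; (apply: mem_ords12 || apply: mem_ords4).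
Qed.
Definition grel (g : gen) (y z : H) : bool :=
  match g with gU => Defs.relU y z | gP => Defs.relP y z | gL => Defs.relL y z end.

Lemma gen_relE g y z : ((y, z) \in gen_rel g) = grel g y z.
Proof. by case: g; rewrite /= inE. Qed.

Fixpoint img (w : seq gen) (x : H) : seq H :=
  match w with
  | [::] => [seq z <- allH | x == z]
  | g :: w' => let s := img w' x in [seq z <- allH | has (fun y => grel g y z) s]
  end.

Lemma mem_img w x z : (z \in img w x) = ((x, z) \in eval w).
Proof.
elim: w z => [|g w IH] z.
  rewrite [img _ _](_ : _ = [seq z <- allH | x == z]); last by [].
  rewrite mem_filter mem_allH andbT.
  by rewrite [eval _](_ : _ = idrel); [rewrite inE|].
rewrite [img _ _](_ : _ = [seq z <- allH | has (fun y => grel g y z) (img w x)]); last by [].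
rewrite mem_filter mem_allH andbT.
rewrite [eval _](_ : _ = Defs.comp (gen_rel g) (eval w)); last by [].
rewrite inE.
apply/hasP/existsP => [[y Hy Hg]|[y /andP [Hy Hg]]].
  by exists y; rewrite -IH Hy gen_relE.
by exists y; rewrite ?IH // -gen_relE.
Qed.

Definition sigR (R : hrel) : seq (seq H) :=
  [seq [seq z <- allH | (x, z) \in R] | x <- allH].
Definition sigw (w : seq gen) : seq (seq H) := [seq img w x | x <- allH].

Lemma img_eq w x : img w x = [seq z <- allH | (x, z) \in eval w].
Proof.
case: w => [|g w].
  rewrite [LHS](_ : _ = [seq z <- allH | x == z]); last by [].
  by apply: eq_filter => z; rewrite inE.
have E : img (g :: w) x = [seq z <- allH | has (fun y => grel g y z) (img w x)] by [].
rewrite {1}E; apply: eq_filter => z; rewrite -mem_img E mem_filter mem_allH andbT.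
by [].
Qed.

Lemma sigwE w : sigw w = sigR (eval w).
Proof. by apply: eq_map => x; rewrite img_eq. Qed.

Lemma sig_eval w1 w2 : sigw w1 = sigw w2 -> eval w1 = eval w2.
Proof.
rewrite /sigw => /eq_in_map H12; apply/setP => [[x z]].
by rewrite -!mem_img H12 // mem_allH.
Qed.

Lemma eval_cat_l u x y : eval x = eval y -> eval (u ++ x) = eval (u ++ y).
Proof. by move=> E; elim: u => [|g u IH] //=; rewrite IH. Qed.

Lemma comp_idl (R : hrel) : Defs.comp idrel R = R.
Proof.
apply/setP => [[x z]]; rewrite inE /=; apply/existsP/idP => [[y /andP [H1]]|H].
  by rewrite inE /= => /eqP <-.
by exists z; rewrite H inE /=.
Qed.

Lemma compA (A B C : hrel) : Defs.comp A (Defs.comp B C) = Defs.comp (Defs.comp A B) C.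
Proof.
apply/setP => [[x z]]; rewrite !inE /=; apply/existsP/existsP.
  move=> [y /andP [H1 H2]]; move: H1; rewrite inE /= => /existsP [t /andP [H3 H4]].
  by exists t; rewrite H3 inE /=; apply/existsP; exists y; rewrite H4.
move=> [y /andP [H1 H2]]; move: H2; rewrite inE /= => /existsP [t /andP [H3 H4]].
by exists t; rewrite H4 andbT inE /=; apply/existsP; exists y; rewrite H1.
Qed.

Lemma eval_cat a v : eval (a ++ v) = Defs.comp (eval a) (eval v).
Proof. elim: a => [|g a IH] /=; first by rewrite comp_idl. by rewrite IH compA. Qed.

Definition rels_ok : bool := all (fun lr => sigw lr.1 == sigw lr.2) presentation_rels.
Lemma rels_ok_true : rels_ok. Proof. by vm_compute. Qed.

Lemma In_mem (T : eqType) (a : T) s : List.In a s -> a \in s.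
Proof. elim: s => //= b s IH [->|/IH H]; rewrite inE ?eqxx ?H ?orbT //. Qed.

Lemma pres_cong_sound w1 w2 : pres_cong w1 w2 -> eval w1 = eval w2.
Proof.
elim=> [l r u v Hin| w | w1' w2' _ IH | w1' w2' w3' _ IH1 _ IH2] //.
- apply: eval_cat_l; rewrite !eval_cat; congr Defs.comp; apply: sig_eval.
  by apply/eqP; have := allP rels_ok_true _ (In_mem Hin).
- by rewrite IH1.
Qed.

Definition NF_uniq : bool := uniq [seq sigw w | w <- NF].
Lemma NF_uniq_true : NF_uniq. Proof. by vm_compute. Qed.

Lemma uniq_evalNF : uniq [seq eval w | w <- NF].
Proof.
apply: (@map_uniq _ _ sigR); rewrite -map_comp.
have := NF_uniq_true; rewrite /NF_uniq; congr (uniq _); apply: eq_map => w /=.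
by rewrite sigwE.
Qed.

Theorem mainTheorem1 :
  (exists s : seq hrel, uniq s /\ size s = 40 /\ (forall R : hrel, R \in s <-> inM R)) /\
  (forall w1 w2 : seq gen, eval w1 = eval w2 <-> pres_cong w1 w2).
Proof.
split.
  exists [seq eval w | w <- NF]; split; first exact: uniq_evalNF.
  split; first by rewrite size_map.
  move=> R; split.
    by case/mapP => w _ ->; exists w.
  case=> w <-; have [H1 H2] := nf_ok w; apply/mapP; exists (nf w) => //.
  exact: pres_cong_sound.
move=> w1 w2; split; last exact: pres_cong_sound.
move=> E; have [A1 B1] := nf_ok w1; have [A2 B2] := nf_ok w2.
have E' : eval (nf w1) = eval (nf w2).
  by rewrite -(pres_cong_sound A1) -(pres_cong_sound A2).
have Enf : nf w1 = nf w2.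
  have := uniq_evalNF; move/uniqP => /(_ (eval [::])).
  move=> Hu.
  have i1 := B1; have i2 := B2.
  rewrite -(nth_index [::] B1) -(nth_index [::] B2).
  congr nth; apply: Hu; rewrite ?inE ?size_map ?index_mem //.
  by rewrite !(nth_map [::]) ?index_mem // !nth_index.
apply: pc_trans A1 _; rewrite Enf; exact: pc_sym.
Qed.
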